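(* Let $Q$ be a probability measure on $(\Omega,\mathcal G_\infty)$ equivalent to $P$ such that the density process ${}^{\mathcal G}Z_t=\mathbb E[dQ/dP\mid\mathcal G_t]$ is $\mathbb F$-adapted. Then ${}^{o,Q}M={}^oM$, i.e. $\mathbb E^Q[M_t\mid\mathcal F_t]=\mathbb E^P[M_t\mid\mathcal F_t]$ a.s. for all $t\ge0$.
   Context: $B^1,B^2,B^3$ are independent standard Brownian motions on $(\Omega,\mathcal F,P)$ with $(B^1_0,B^2_0,B^3_0)=(1,0,0)$, and $M_t:=((B^1_t)^2+(B^2_t)^2+(B^3_t)^2)^{-1/2}$ is the inverse three-dimensional Bessel process. $\mathbb G$ is the (augmented) natural filtration of $(B^1,B^2,B^3)$ and $\mathbb F$ is the (augmented) natural filtration of $(B^1,B^2)$. ${}^{o,Q}M_t=\mathbb E^Q[M_t\mid\mathcal F_t]$ and ${}^oM={}^{o,P}M$. *)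

(* Defs.v *)
From HB Require Import structures.
From mathcomp Require Import all_boot all_order all_algebra.
From mathcomp Require Import all_classical all_reals all_analysis measurable_realfun normal_distribution.
Set Implicit Arguments. Unset Strict Implicit. Unset Printing Implicit Defensive.
Import Order.TTheory GRing.Theory Num.Theory.
Import numFieldNormedType.Exports.
Local Open Scope classical_set_scope.
Local Open Scope ring_scope.

Definition sub_measurable {d} {T : measurableType d} {R : realType}
    (H : set (set T)) (Y : T -> \bar R) : Prop :=
  forall B : set (\bar R), measurable B -> H (Y @^-1` B).

Definition is_cond_exp {d} {T : measurableType d} {R : realType}
    (mu : {measure set T -> \bar R}) (H : set (set T)) (X Y : T -> \bar R) : Prop :=
  [/\ sub_measurable H Y, (forall w, (0 <= Y w)%E) &
      forall A, H A -> (\int[mu]_(w in A) Y w = \int[mu]_(w in A) X w)%E].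

Definition sigma_upto {d} {T : measurableType d} {R : realType}
    (X : R -> T -> R) (s : R) : set (set T) :=
  <<s [set A | exists u V, [/\ 0 <= u <= s, measurable V & A = X u @^-1` V]] >>.

Definition sigma_proc {d} {T : measurableType d} {R : realType}
    (X : R -> T -> R) : set (set T) :=
  <<s [set A | exists u V, [/\ 0 <= u, measurable V & A = X u @^-1` V]] >>.

Definition is_BM {d} {T : measurableType d} {R : realType}
    (P : probability T R) (X : R -> T -> R) (x : R) : Prop :=
  [/\ (forall t, measurable_fun setT (X t)),
      {ae P, forall w, X 0 w = x},
      {ae P, forall w, {within `[0, +oo[, continuous (fun t => X t w)}} &
      forall s t, 0 <= s -> s < t ->
        (forall V, measurable V ->
           P ((fun w => (X t w - X s w)%R) @^-1` V) = normal_prob 0 (Num.sqrt (t - s)) V)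
        /\ (forall A V, sigma_upto X s A -> measurable V ->
           P (A `&` ((fun w => (X t w - X s w)%R) @^-1` V))
           = (P A * P ((fun w => (X t w - X s w)%R) @^-1` V))%E)].

Definition aug_nat_filtration {d} {T : measurableType d} {R : realType}
    (P : probability T R) (S : set (R -> T -> R)) (t : R) : set (set T) :=
  <<s [set A | (exists X u V, [/\ S X, 0 <= u <= t, measurable V & A = X u @^-1` V])
              \/ (measurable A /\ P A = 0%E)] >>.

Definition filtration_inf {d} {T : measurableType d} {R : realType}
    (G : R -> set (set T)) : set (set T) :=
  <<s \bigcup_(t in [set t : R | 0 <= t]) G t >>.

(* inverse three-dimensional Bessel process M_t = |B_t|^{-1} (with 0^-1 := 0,
   which only matters on a P-null set) *)
Definition inv_bessel3 {d} {T : measurableType d} {R : realType}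
    (B1 B2 B3 : R -> T -> R) (t : R) (w : T) : \bar R :=
  ((Num.sqrt (B1 t w ^+ 2 + B2 t w ^+ 2 + B3 t w ^+ 2))^-1)%:E.

(* Main.v *)
Require Import Defs.
From HB Require Import structures.
From mathcomp Require Import all_boot all_order all_algebra.
From mathcomp Require Import all_classical all_reals all_analysis measurable_realfun normal_distribution.
Import Order.TTheory GRing.Theory Num.Theory.
Import numFieldNormedType.Exports.
Local Open Scope classical_set_scope.
Local Open Scope ring_scope.
Set Implicit Arguments. Unset Strict Implicit.
Import archimedean.Num.Theory.
Import HBNNSimple.

Lemma measurable_inv (R : realType) : measurable_fun setT (@GRing.inv R).
Proof.
have -> : (setT : set R) = ~` [set 0] `|` [set 0] by rewrite setvU.
apply/measurable_funU => //.
  exact: measurableC.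
split; last exact: measurable_fun_set1.
apply: open_continuous_measurable_fun.
  by apply: closed_openC; apply: accessible_closed_set1; apply: hausdorff_accessible; exact: norm_hausdorff.
move=> x; rewrite inE /= => /eqP x0; exact: inv_continuous.
Qed.
Lemma measurable_invsqrt (R : realType) : measurable_fun setT (fun x : R => (Num.sqrt x)^-1).
Proof.
apply: measurableT_comp; first exact: measurable_inv.
apply: continuous_measurable_fun; exact: sqrt_continuous.
Qed.
Local Open Scope ereal_scope.

Lemma sub_mfun d (T : measurableType d) (G0 : set (set T))
  (sub : <<s G0>> `<=` measurable) d' (U : measurableType d') (f : T -> U) :
  @measurable_fun _ _ (g_sigma_algebraType G0) U setT f -> measurable_fun setT f.
Proof.
move=> mf _ B mB; rewrite setTI; apply: sub.
by have := mf measurableT B mB; rewrite setTI.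
Qed.

Lemma simple_int (R : realType) d (T : measurableType d) (G0 : set (set T))
  (sub : <<s G0>> `<=` measurable) (mu : {measure set T -> \bar R})
  (f : T -> \bar R) (mf : measurable_fun setT f) (f0 : forall x, 0 <= f x)
  (s : {nnsfun (g_sigma_algebraType G0) >-> R}) :
  let e := finmap.enum_fset (fset_set (range (s : g_sigma_algebraType G0 -> R))) in
  \int[mu]_x ((s x)%:E * f x) =
  \sum_(i < size e) \int[mu]_(x in s @^-1` [set e`_i]) ((e`_i)%:E * f x).
Proof.
move=> e.
have mA (i : 'I_(size e)) : measurable (s @^-1` [set e`_i] : set T).
  apply: sub; exact: (measurable_funPTI s (measurable_set1 _)).
have tnn (i : 'I_(size e)) x : 0 <= ((e`_i * \1_(s @^-1` [set e`_i]) x)%:E * f x).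
  apply: mule_ge0 => //; rewrite lee_fin indicE.
  case: (boolP (x \in _)) => [|_]; last by rewrite mulr0.
  by rewrite inE /= => <-; rewrite mulr1.
have pw x : (s x)%:E * f x =
    \sum_(i < size e) ((e`_i * \1_(s @^-1` [set e`_i]) x)%:E * f x).
  rewrite (fimfunEord s x) -sumEFin ge0_sume_distrl //.
  move=> i _; rewrite lee_fin indicE.
  case: (boolP (x \in _)) => [|_]; last by rewrite mulr0.
  by rewrite inE /= => <-; rewrite mulr1.
under eq_integral => x _ do rewrite pw.
rewrite ge0_integral_sum //; last first.
  move=> i; apply: emeasurable_funM => //; apply/measurable_EFinP.
  by apply: measurable_funM => //; exact: measurable_indic.
apply: eq_bigr => i _; rewrite [RHS]integral_mkcond; apply: eq_integral => x _.
rewrite /patch indicE; case: (boolP (x \in _)) => _.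
  by rewrite mulr1.
by rewrite mulr0 mul0e.
Qed.
Lemma cvg_EFinM_nd (R : realType) (u : nat -> R) (l c : \bar R) :
  (forall n, (0 <= u n)%R) -> nondecreasing_seq u ->
  (fun n => (u n)%:E) @ \oo --> l -> 0 <= c ->
  (fun n => (u n)%:E * c) @ \oo --> l * c.
Proof.
move=> u0 nd ul; case: c => [r| |] // _.
  exact: cvgeZr.
have [[n0 un0]|nex] := pselect (exists n, (0 < u n)%R).
  have ll : (u n0)%:E <= l.
    rewrite -(cvg_lim _ ul) //; apply: lime_ge; first by apply/cvg_ex; exists l.
    by exists n0 => // n /= n0n; rewrite lee_fin; exact: nd.
  rewrite gt0_muley; last by apply: (lt_le_trans _ ll); rewrite lte_fin.
  apply: cvg_near_cst; exists n0 => // n /= n0n.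
  by rewrite gt0_muley // lte_fin; apply: (lt_le_trans un0); exact: nd.
have u00 n : u n = 0%R.
  apply/eqP; rewrite eq_le u0 andbT; rewrite leNgt; apply/negP => h.
  by apply: nex; exists n.
have l0 : l = 0.
  have e : (fun n => (u n)%:E) = cst 0 by apply/funext => n; rewrite u00.
  rewrite e in ul; apply/esym; exact: (cvg_unique _ (@cvg_cst _ _ _ _ _) ul).
rewrite l0 mul0e; under eq_fun do rewrite u00 mul0e; exact: cvg_cst.
Qed.

Lemma key_eq (R : realType) d (T : measurableType d) (G0 : set (set T))
  (sub : <<s G0>> `<=` measurable) (mu1 mu2 : {measure set T -> \bar R})
  (f1 f2 : T -> \bar R) (mf1 : measurable_fun setT f1) (mf2 : measurable_fun setT f2)
  (f10 : forall x, 0 <= f1 x) (f20 : forall x, 0 <= f2 x)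
  (hyp : forall A, <<s G0>> A ->
     \int[mu1]_(x in A) f1 x = \int[mu2]_(x in A) f2 x)
  (g : T -> \bar R) (mg : @measurable_fun _ _ (g_sigma_algebraType G0) _ setT g)
  (g0 : forall x, 0 <= g x) :
  \int[mu1]_x (g x * f1 x) = \int[mu2]_x (g x * f2 x).
Proof.
pose h := nnsfun_approx (@measurableT _ (g_sigma_algebraType G0)) mg.
have mh n : measurable_fun (setT : set T) (fun x : T => (h n x)%:E).
  apply/measurable_EFinP.
  apply: (@sub_mfun _ _ _ sub _ R (h n : T -> R)).
  exact: measurable_funPT.
have lim_eq (mu : {measure set T -> \bar R}) f (mf : measurable_fun setT f)
    (f0 : forall x, 0 <= f x) :
    \int[mu]_x (g x * f x) = limn (fun n => \int[mu]_x ((h n x)%:E * f x)).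
  rewrite -monotone_convergence //.
  - apply: eq_integral => x _; apply/esym/cvg_lim => //.
    apply: cvg_EFinM_nd => //.
    + by move=> m n mn; have := nd_nnsfun_approx measurableT mg mn => /lefP; apply.
    + exact: (cvg_nnsfun_approx measurableT mg (fun x _ => g0 x)).
  - by move=> n; exact: emeasurable_funM.
  - by move=> n x _; apply: mule_ge0 => //; rewrite lee_fin; apply: fun_ge0.
  - move=> x _ m n mn; apply: lee_wpmul2r => //; rewrite lee_fin.
    by have := nd_nnsfun_approx measurableT mg mn => /lefP; apply.
rewrite (lim_eq mu1 f1) // (lim_eq mu2 f2) //; congr (limn _).
apply/funext => n.
rewrite (simple_int sub mu1 mf1 f10) (simple_int sub mu2 mf2 f20).
apply: eq_bigr => i _.
set c := _`_i; set A := _ @^-1` _.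
have [c0|c0] := leP 0%R c.
  have hA : <<s G0>> (A : set T) by exact: (measurable_funPTI (h n) (measurable_set1 _)).
  have mA : measurable (A : set T) by exact: sub.
  rewrite (ge0_integralZl _ mA (measurable_funTS mf1)) //.
  rewrite (ge0_integralZl _ mA (measurable_funTS mf2)) //.
  by rewrite hyp.
have -> : A = set0.
  apply/seteqP; split => // x; rewrite /A /= => hx.
  by move: c0; rewrite -hx ltNge fun_ge0.
by rewrite !integral_set0.
Qed.
Lemma E_null (R : realType) d (T : measurableType d) (mu : probability T R)
  (Y1 Y2 : T -> \bar R) (E : set T) (mE : measurable E)
  (m1 : measurable_fun setT Y1) (m2 : measurable_fun setT Y2)
  (n1 : forall x, 0 <= Y1 x) (n2 : forall x, 0 <= Y2 x)
  (hyp : \int[mu]_(x in E) Y1 x = \int[mu]_(x in E) Y2 x) (n m : nat)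
  (hE : forall x, E x -> Y1 x <= n%:R%:E /\ Y1 x + (m.+1%:R^-1)%:E <= Y2 x) :
  mu E = 0.
Proof.
set eps : R := (m.+1%:R^-1)%R.
have eps0 : (0 < eps)%R by rewrite invr_gt0 ltr0n.
have I1le : \int[mu]_(x in E) Y1 x <= n%:R%:E * mu E.
  rewrite -integral_cst //; apply: ge0_le_integral => //.
  - exact: measurable_funTS.
  - by move=> x Ex; have [] := hE x Ex.
have I2ge : \int[mu]_(x in E) Y1 x + eps%:E * mu E <= \int[mu]_(x in E) Y2 x.
  rewrite -integral_cst // -ge0_integralD //; last 2 first.
  - exact: measurable_funTS.
  - by move=> x _; rewrite lee_fin ltW.
  apply: ge0_le_integral => //.
  - by move=> x _; apply: adde_ge0 => //; rewrite lee_fin ltW.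
  - apply: emeasurable_funD; first exact: measurable_funTS.
    exact: measurable_cst.
  - exact: measurable_funTS.
  - by move=> x Ex; have [] := hE x Ex.
have fa : mu E \is a fin_num by rewrite fin_num_measure.
have I10 : 0 <= \int[mu]_(x in E) Y1 x by apply: integral_ge0 => x _.
have a0 : 0 <= mu E by [].
have fI : \int[mu]_(x in E) Y1 x \is a fin_num.
  rewrite ge0_fin_numE //; apply: (le_lt_trans I1le).
  by rewrite -(fineK fa) -EFinM ltry.
move: I1le I2ge I10 a0; rewrite -hyp -(fineK fa) -(fineK fI).
rewrite -EFinM -EFinD !lee_fin => _ h1 h2 h3.
apply/eqP; rewrite eq_le; apply/andP; split; last by rewrite lee_fin.
rewrite lee_fin.
have : (eps * fine (mu E) <= 0)%R by rewrite -(lerD2l (fine (\int[mu]_(x in E) Y1 x))) addr0.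
by rewrite pmulr_rle0.
Qed.

Lemma lt_null (R : realType) d (T : measurableType d) (G0 : set (set T))
  (sub : <<s G0>> `<=` measurable) (mu : probability T R)
  (Y1 Y2 : T -> \bar R)
  (m1 : @measurable_fun _ _ (g_sigma_algebraType G0) _ setT Y1)
  (m2 : @measurable_fun _ _ (g_sigma_algebraType G0) _ setT Y2)
  (n1 : forall x, 0 <= Y1 x) (n2 : forall x, 0 <= Y2 x)
  (hyp : forall A, <<s G0>> A -> \int[mu]_(x in A) Y1 x = \int[mu]_(x in A) Y2 x) :
  <<s G0>> [set x | Y1 x < Y2 x] /\ mu [set x | Y1 x < Y2 x] = 0.
Proof.
have hS : <<s G0>> [set x | Y1 x < Y2 x].
  have := @measurable_lte _ (g_sigma_algebraType G0) R setT measurableT Y1 Y2 m1 m2.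
  by rewrite setTI.
split => //.
pose E n m := [set x | Y1 x <= n%:R%:E] `&` [set x | Y1 x + (m.+1%:R^-1)%:E <= Y2 x].
have hE n m : <<s G0>> (E n m).
  apply: (@measurableI _ (g_sigma_algebraType G0)).
    have := @measurable_lee _ (g_sigma_algebraType G0) R setT measurableT Y1
      (cst n%:R%:E) m1 (measurable_cst _).
    by rewrite setTI.
  have := @measurable_lee _ (g_sigma_algebraType G0) R setT measurableT
     (fun x => Y1 x + (m.+1%:R^-1)%:E) Y2 _ m2.
  rewrite setTI; apply.
  by apply: emeasurable_funD => //; exact: measurable_cst.
have m1T := sub_mfun sub m1.
have m2T := sub_mfun sub m2.
have nE n m : mu (E n m) = 0.
  apply: (@E_null _ _ _ mu Y1 Y2 _ (sub _ (hE n m)) m1T m2T n1 n2 (hyp _ (hE n m)) n m).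
  by move=> x [].
have sS : [set x | Y1 x < Y2 x] `<=` \bigcup_n \bigcup_m E n m.
  move=> x /=; case E1: (Y1 x) => [r| |]; last by have := n1 x; rewrite E1.
  - have r0 : (0 <= r)%R by have := n1 x; rewrite E1 lee_fin.
    case E2: (Y2 x) => [s| |] // rs.
    + exists (Num.truncn r).+1 => //; exists (Num.truncn ((s - r)^-1)) => //.
      rewrite /E /= E1 E2; split; first by rewrite lee_fin ltW // truncnS_gt.
      rewrite -EFinD lee_fin -lerBrDl; apply: ltW.
      have sr : (0 < s - r)%R by rewrite subr_gt0 -lte_fin.
      set k := Num.truncn _; rewrite -[(s - r)%R]invrK ltf_pV2 ?posrE ?invr_gt0 ?ltr0n //.
      exact: truncnS_gt.
    + exists (Num.truncn r).+1 => //; exists 0%N => //.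
      rewrite /E /= E1 E2; split; first by rewrite lee_fin ltW // truncnS_gt.
      exact: leey.
  - by rewrite ltNge leey.
have : mu.-negligible (\bigcup_n \bigcup_m E n m).
  apply: negligible_bigcup => n; apply: negligible_bigcup => m.
  by exists (E n m); split; [exact: (sub _ (hE n m))|exact: nE|].
move=> [A [mA A0 sA]]; apply/eqP; rewrite eq_le measure_ge0 andbT -A0.
apply: le_measure; rewrite ?inE //; first exact: sub.
exact: subset_trans sS sA.
Qed.

Lemma uniq_ce (R : realType) d (T : measurableType d) (G0 : set (set T))
  (sub : <<s G0>> `<=` measurable) (mu : probability T R)
  (Y1 Y2 : T -> \bar R)
  (m1 : @measurable_fun _ _ (g_sigma_algebraType G0) _ setT Y1)
  (m2 : @measurable_fun _ _ (g_sigma_algebraType G0) _ setT Y2)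
  (n1 : forall x, 0 <= Y1 x) (n2 : forall x, 0 <= Y2 x)
  (hyp : forall A, <<s G0>> A -> \int[mu]_(x in A) Y1 x = \int[mu]_(x in A) Y2 x) :
  <<s G0>> [set x | Y1 x != Y2 x] /\ mu [set x | Y1 x != Y2 x] = 0.
Proof.
have [h1 e1] := lt_null sub m1 m2 n1 n2 hyp.
have [h2 e2] := lt_null sub m2 m1 n2 n1 (fun A hA => esym (hyp A hA)).
rewrite set_neq_lt; split.
  exact: (@measurableU _ (g_sigma_algebraType G0)).
apply/eqP; rewrite eq_le measure_ge0 andbT.
apply: le_trans (measureU2 _ _ _) _.
- exact: sub.
- exact: sub.
- have -> : mu [set x | Y1 x < Y2 x] + mu [set x | Y2 x < Y1 x] = 0 + 0.
    by congr (_ + _); [exact: e1|exact: e2].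
  by rewrite adde0.
Qed.

Lemma sm_mfun d (T : measurableType d) (R : realType) (G0 : set (set T))
  (Y : T -> \bar R) : sub_measurable <<s G0>> Y ->
  @measurable_fun _ _ (g_sigma_algebraType G0) _ setT Y.
Proof. by move=> h _ B mB; rewrite setTI; exact: h. Qed.

Lemma coarsen d (T : measurableType d) (R : realType) (G1 G2 : set (set T))
  (s12 : <<s G1>> `<=` <<s G2>>) (Y : T -> \bar R) :
  @measurable_fun _ _ (g_sigma_algebraType G1) _ setT Y ->
  @measurable_fun _ _ (g_sigma_algebraType G2) _ setT Y.
Proof.
move=> h _ B mB; apply: s12; exact: (h measurableT B mB).
Qed.

Lemma ind_mfun d (T : measurableType d) (R : realType) (G0 : set (set T))
  (A : set T) (hA : <<s G0>> A) (Y : T -> \bar R) :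
  @measurable_fun _ _ (g_sigma_algebraType G0) _ setT Y ->
  @measurable_fun _ _ (g_sigma_algebraType G0) _ setT
    (fun x => (\1_A x)%:E * Y x).
Proof.
move=> mY; apply: emeasurable_funM => //; apply/measurable_EFinP.
exact: (@measurable_indic _ (g_sigma_algebraType G0)).
Qed.

Lemma int_ind d (T : measurableType d) (R : realType) (mu : {measure set T -> \bar R})
  (A : set T) (f : T -> \bar R) :
  \int[mu]_(x in A) f x = \int[mu]_x ((\1_A x)%:E * f x * 1).
Proof.
rewrite integral_mkcond; apply: eq_integral => x _; rewrite mule1 /patch indicE.
by case: (boolP (x \in A)) => _; rewrite ?mul1e ?mul0e.
Qed.

Lemma aug_sub d (T : measurableType d) (R : realType) (P : probability T R)
  (S : set (R -> T -> R)) (hS : forall X u, S X -> measurable_fun setT (X u)) t :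
  aug_nat_filtration P S t `<=` measurable.
Proof.
apply: (smallest_sub (@sigma_algebra_measurable _ T)).
move=> A [[X [u [V [SX _ mV ->]]]]|[mA _]] //.
by have := hS X u SX measurableT V mV; rewrite setTI.
Qed.

Local Close Scope ereal_scope.
Unset Implicit Arguments.
Theorem mainTheorem8 (R : realType) (d : measure_display) (T : measurableType d)
  (P : probability T R) (B1 B2 B3 : R -> T -> R)
  (hB1 : is_BM P B1 1) (hB2 : is_BM P B2 0) (hB3 : is_BM P B3 0)
  (hind : forall A1 A2 A3, sigma_proc B1 A1 -> sigma_proc B2 A2 -> sigma_proc B3 A3 ->
     P (A1 `&` A2 `&` A3) = (P A1 * P A2 * P A3)%E)
  (Q : probability T R)
  (hequiv : forall A, filtration_inf (aug_nat_filtration P [set B1; B2; B3]) A ->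
     (P A = 0%E <-> Q A = 0%E))
  (D : T -> \bar R)
  (hDm : sub_measurable (filtration_inf (aug_nat_filtration P [set B1; B2; B3])) D)
  (hD0 : forall w, (0 <= D w)%E)
  (hD : forall A, filtration_inf (aug_nat_filtration P [set B1; B2; B3]) A ->
     Q A = (\int[P]_(w in A) D w)%E)
  (Z : R -> T -> \bar R)
  (hZ : forall t, 0 <= t -> is_cond_exp P (aug_nat_filtration P [set B1; B2; B3] t) D (Z t))
  (hZF : forall t, 0 <= t -> sub_measurable (aug_nat_filtration P [set B1; B2] t) (Z t)) :
  forall t, 0 <= t -> forall YP YQ : T -> \bar R,
    is_cond_exp P (aug_nat_filtration P [set B1; B2] t) (inv_bessel3 B1 B2 B3 t) YP ->
    is_cond_exp Q (aug_nat_filtration P [set B1; B2] t) (inv_bessel3 B1 B2 B3 t) YQ ->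
    {ae P, forall w, YP w = YQ w}.
Proof.
move=> t t0 YP YQ [YPm YP0 YPi] [YQm YQ0 YQi].
have [Zm Z0 Zi] := hZ t t0.
have ZFm := hZF t t0.
set S3 := [set B1; B2; B3]; set S2 := [set B1; B2].
set M := inv_bessel3 B1 B2 B3 t.
pose gen (S : set (R -> T -> R)) (s : R) := [set A | (exists X u V, [/\ S X, 0 <= u <= s, measurable V & A = X u @^-1` V])
              \/ (measurable A /\ P A = 0%E)].
pose genF := gen S2 t. pose genG := gen S3 t.
pose genI := \bigcup_(s in [set s : R | 0 <= s]) aug_nat_filtration P S3 s.
have mB (X : R -> T -> R) u : S3 X -> measurable_fun setT (X u).
  case=> [[]|] ->.
  - by case: hB1.
  - by case: hB2.
  - by case: hB3.
have Gsub : <<s genG>> `<=` measurable by exact: aug_sub.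
have Fsub : <<s genF>> `<=` measurable.
  by apply: aug_sub => X u S2X; apply: mB; case: S2X => ->; [left; left|left; right].
have Isub : <<s genI>> `<=` measurable.
  apply: (smallest_sub (@sigma_algebra_measurable _ T)).
  by move=> A [s _]; exact: aug_sub.
have FG : <<s genF>> `<=` <<s genG>>.
  apply: sub_sigma_algebra2 => A [[X [u [V [S2X hu mV ->]]]]|h]; last by right.
  by left; exists X, u, V; split => //; case: S2X => ->; [left; left|left; right].
have GI : <<s genG>> `<=` <<s genI>>.
  move=> A hA; apply: sub_sigma_algebra.
  by exists t => //.
have FI := subset_trans FG GI.
have hBt (X : R -> T -> R) : S3 X ->
    @measurable_fun _ _ (g_sigma_algebraType genG) R setT (X t).
  move=> S3X _ V mV; rewrite setTI; apply: sub_sigma_algebra; left.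
  by exists X, t, V; split => //; rewrite t0 lexx.
have MmG : @measurable_fun _ _ (g_sigma_algebraType genG) _ setT M.
  rewrite /M /inv_bessel3; apply/measurable_EFinP.
  have h : @measurable_fun _ _ (g_sigma_algebraType genG) R setT
      (fun w => B1 t w ^+ 2 + B2 t w ^+ 2 + B3 t w ^+ 2).
    apply: measurable_funD; first apply: measurable_funD.
    - by apply: measurable_funX; apply: hBt; left; left.
    - by apply: measurable_funX; apply: hBt; left; right.
    - by apply: measurable_funX; apply: hBt; right.
  exact: (measurableT_comp (@measurable_invsqrt R) h).
have M0 x : (0 <= M x)%E.
  by rewrite /M /inv_bessel3 lee_fin invr_ge0 sqrtr_ge0.
have MmT := sub_mfun Gsub MmG.
have YPmF := sm_mfun (G0 := genF) YPm.
have YQmF := sm_mfun (G0 := genF) YQm.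
have ZmG := sm_mfun (G0 := genG) Zm.
have ZmF := sm_mfun (G0 := genF) ZFm.
have DmI := sm_mfun (G0 := genI) hDm.
have YPT := sub_mfun Fsub YPmF.
have ZT := sub_mfun Gsub ZmG.
have DT := sub_mfun Isub DmI.
have c1m : measurable_fun (setT : set T) (cst (1%E : \bar R)) by exact: measurable_cst.
have c10 : forall x : T, (0 <= cst (1%E : \bar R) x)%E by move=> x; rewrite /= lee01.
have hQI B : <<s genI>> B -> (\int[Q]_(x in B) cst 1%E x = \int[P]_(x in B) D x)%E.
  move=> hB; rewrite integral_cst ?mul1e; [exact: hD|exact: Isub].
have ind0 A (f : T -> \bar R) : (forall x, 0 <= f x)%E -> forall x, (0 <= (\1_A x)%:E * f x)%E.
  move=> f0 x; apply: mule_ge0; last exact: f0.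
  by rewrite lee_fin indicE; case: (_ \in _).
have chain A : <<s genF>> A ->
    (\int[Q]_(x in A) YP x = \int[Q]_(x in A) YQ x)%E.
  move=> FA; rewrite (YQi A FA) [LHS]int_ind [RHS]int_ind.
  transitivity (\int[P]_x ((\1_A x)%:E * YP x * D x))%E.
    exact: (key_eq Isub c1m DT c10 hD0 hQI
      (ind_mfun (FI A FA) (coarsen FI YPmF)) (ind0 A YP YP0)).
  transitivity (\int[P]_x ((\1_A x)%:E * YP x * Z t x))%E.
    exact: (key_eq Gsub DT ZT hD0 Z0 (fun B hB => esym (Zi B hB))
      (ind_mfun (FG A FA) (coarsen FG YPmF)) (ind0 A YP YP0)).
  transitivity (\int[P]_x ((\1_A x)%:E * Z t x * YP x))%E.
    by apply: eq_integral => x _; rewrite muleAC.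
  transitivity (\int[P]_x ((\1_A x)%:E * Z t x * M x))%E.
    exact: (key_eq Fsub YPT MmT YP0 M0 (fun B hB => YPi B hB)
      (ind_mfun FA ZmF) (ind0 A (Z t) Z0)).
  transitivity (\int[P]_x ((\1_A x)%:E * M x * Z t x))%E.
    by apply: eq_integral => x _; rewrite muleAC.
  transitivity (\int[P]_x ((\1_A x)%:E * M x * D x))%E.
    exact: (key_eq Gsub ZT DT Z0 hD0 (fun B hB => Zi B hB)
      (ind_mfun (FG A FA) MmG) (ind0 A M M0)).
  exact: (key_eq Isub DT c1m hD0 c10 (fun B hB => esym (hQI B hB))
      (ind_mfun (FI A FA) (coarsen GI MmG)) (ind0 A M M0)).
have [hS QS] := uniq_ce Fsub YPmF YQmF YP0 YQ0 chain.
have PS := (hequiv _ (FI _ hS)).2 QS.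
exists [set x | YP x != YQ x]; split => //; first exact: Fsub.
by move=> x /= h; apply/eqP.
Qed.
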